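(* There is an absolute constant $d$ such that for every $N\ge1$ and every randomized XOR decision tree that computes ${\rm MAJORITY}$ exactly on $N$-bit inputs, there exists an input $X\in\{0,1\}^N$ on which the expected number of queries made is at least $\frac23N-\sqrt{\frac{8N}{9\pi}}-d$.
   Context: For $X=X_0X_1\cdots X_{N-1}\in\{0,1\}^N$, ${\rm MAJORITY}(X)=0$ if $X$ contains more zeros than ones and ${\rm MAJORITY}(X)=1$ otherwise. An XOR decision tree on $N$-bit inputs is a deterministic adaptive algorithm that on input $X$ makes a sequence of queries, each either a single bit $X_i$ or $X_i\oplus X_j$ ($0\le i,j\le N-1$), each chosen depending on previous answers, and then outputs a value. A randomized XOR decision tree is a probability distribution over XOR decision trees. It computes $f$ exactly if on every input $X$ it outputs $f(X)$ with probability $1$. *)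

(* Defs.v *)
From Stdlib Require Import Reals Lra Lia Arith List.
Import ListNotations.
Open Scope R_scope.

Inductive query : Type :=
| QBit : nat -> query
| QXor : nat -> nat -> query.

(* Deterministic XOR decision tree: a leaf outputs a bit; an inner node makes
   a query and continues in the subtree selected by the answer
   (first subtree for answer 0 = false, second for answer 1 = true). *)
Inductive xtree : Type :=
| Leaf : bool -> xtree
| Node : query -> xtree -> xtree -> xtree.

Definition valid_query (N : nat) (q : query) : Prop :=
  match q with
  | QBit i => (i < N)%nat
  | QXor i j => (i < N)%nat /\ (j < N)%nat
  end.

Fixpoint valid_tree (N : nat) (t : xtree) : Prop :=
  match t with
  | Leaf _ => True
  | Node q t0 t1 => valid_query N q /\ valid_tree N t0 /\ valid_tree N t1
  end.

Definition answer (q : query) (X : list bool) : bool :=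
  match q with
  | QBit i => nth i X false
  | QXor i j => xorb (nth i X false) (nth j X false)
  end.

Fixpoint output (t : xtree) (X : list bool) : bool :=
  match t with
  | Leaf b => b
  | Node q t0 t1 => if answer q X then output t1 X else output t0 X
  end.

Fixpoint cost (t : xtree) (X : list bool) : nat :=
  match t with
  | Leaf _ => 0
  | Node q t0 t1 => S (if answer q X then cost t1 X else cost t0 X)
  end.

Definition ones (X : list bool) : nat := length (filter (fun b => b) X).
Definition zeros (X : list bool) : nat := length (filter negb X).

Definition majority (X : list bool) : bool :=
  if Nat.ltb (ones X) (zeros X) then false else true.

(* Main.v *)
Require Import Defs.
From Stdlib Require Import Reals List.
From Stdlib Require Import Lra Lia ZArith Bool FunctionalExtensionality Classical ClassicalEpsilon.
From Coquelicot Require Import Coquelicot.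
Open Scope R_scope.

Definition sinp (n : nat) (x : R) := sin x ^ n.

Lemma sinp_cont n x : continuous (sinp n) x.
Proof. apply (ex_derive_continuous (K:=R_AbsRing) (V:=R_NormedModule)). unfold sinp. auto_derive. auto. Qed.

Lemma ex_I n : ex_RInt (sinp n) 0 (PI/2).
Proof. apply (ex_RInt_continuous (V:=R_CompleteNormedModule)). intros; apply sinp_cont. Qed.

Definition WI n := RInt (sinp n) 0 (PI/2).
Definition Fn n x := - cos x * sin x ^ (n+1).
Definition dFn n x := (INR n + 2) * sinp (n+2) x - (INR n + 1) * sinp n x.

Lemma I_rec n : (INR n + 2) * WI (n+2) = (INR n + 1) * WI n.
Proof.
  assert (H : is_RInt (dFn n) 0 (PI/2) (minus (Fn n (PI/2)) (Fn n 0))).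
  { apply (is_RInt_derive (V:=R_CompleteNormedModule)).
    - intros x _. unfold Fn.
      replace (dFn n x) with
        (- (- sin x) * sin x ^ (n+1) + - cos x * (INR (n+1) * cos x * sin x ^ Nat.pred (n+1))).
      2:{ unfold dFn, sinp. rewrite plus_INR. simpl INR.
          replace (n+2)%nat with (S (S n)) by lia. replace (n+1)%nat with (S n) by lia.
          pose proof (sin2_cos2 x) as Hsc. unfold Rsqr in Hsc. simpl. assert (H2: (INR n+1) * sin x ^n * (sin x * sin x + cos x * cos x - 1) = 0) by (rewrite Hsc; ring). lra. }
      apply (is_derive_mult (fun x => - cos x) (fun x => sin x ^ (n+1))).
      + apply (is_derive_opp cos). apply is_derive_cos.
      + apply (is_derive_pow sin). apply is_derive_sin.
      + intros; apply Rmult_comm.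
    - intros x _. apply (ex_derive_continuous (K:=R_AbsRing) (V:=R_NormedModule)). unfold dFn, sinp. auto_derive. auto. }
  apply (is_RInt_unique (V:=R_CompleteNormedModule)) in H.
  assert (E: RInt (dFn n) 0 (PI/2) = minus (scal (INR n+2) (WI (n+2))) (scal (INR n+1) (WI n))).
  { unfold WI. rewrite <- (RInt_scal (V:=R_CompleteNormedModule) (sinp (n+2))) by apply ex_I.
    rewrite <- (RInt_scal (V:=R_CompleteNormedModule) (sinp n)) by apply ex_I.
    rewrite <- (RInt_minus (V:=R_CompleteNormedModule)).
    - apply RInt_ext; intros; unfold dFn; reflexivity.
    - apply (ex_RInt_scal (V:=R_CompleteNormedModule)). apply ex_I.
    - apply (ex_RInt_scal (V:=R_CompleteNormedModule)). apply ex_I. }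
  rewrite H in E. unfold Fn in E. rewrite cos_PI2, sin_0 in E.
  unfold minus, plus, opp, scal in E; simpl in E. unfold mult in E; simpl in E.
  replace (n+1)%nat with (S n) in E by lia. simpl in E. lra.
Qed.

Lemma I0 : WI 0 = PI/2.
Proof. unfold WI. rewrite (RInt_ext _ (fun _ => 1)). 2:{ intros; reflexivity. }
  rewrite RInt_const. unfold scal; simpl. unfold mult; simpl. lra. Qed.

Definition mcos x := - cos x.
Lemma I1 : WI 1 = 1.
Proof.
  assert (H : is_RInt (sinp 1) 0 (PI/2) (minus (mcos (PI/2)) (mcos 0))).
  { apply (is_RInt_derive (V:=R_CompleteNormedModule)).
    - intros x _. unfold sinp. replace (sin x ^ 1) with (- - sin x) by (simpl; ring).
      unfold mcos. apply (is_derive_opp cos). apply is_derive_cos.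
    - intros x _. apply sinp_cont. }
  apply (is_RInt_unique (V:=R_CompleteNormedModule)) in H. unfold WI. rewrite H.
  unfold mcos. rewrite cos_PI2, cos_0. unfold minus, plus, opp; simpl. lra.
Qed.

Lemma sin_01 x : 0 <= x <= PI/2 -> 0 <= sin x <= 1.
Proof. intros. split. apply sin_ge_0; lra. apply SIN_bound. Qed.

Lemma I_ge0 n : 0 <= WI n.
Proof. unfold WI. apply RInt_ge_0. pose proof PI_RGT_0; lra. apply ex_I.
  intros x Hx. unfold sinp. apply pow_le. apply sin_01; lra. Qed.

Lemma I_decr n : WI (S n) <= WI n.
Proof. unfold WI. apply RInt_le. pose proof PI_RGT_0; lra. apply ex_I. apply ex_I.
  intros x Hx. unfold sinp. simpl. pose proof (sin_01 x). assert (0 <= sin x ^ n) by (apply pow_le; apply sin_01; lra).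
  assert (0 <= sin x <= 1) by (apply sin_01; lra). nra. Qed.

Lemma I_prod n : (INR n + 1) * WI (S n) * WI n = PI / 2.
Proof.
  induction n.
  - simpl. rewrite I1, I0. lra.
  - pose proof (I_rec n) as R. replace (n+2)%nat with (S (S n)) in R by lia.
    rewrite S_INR. replace ((INR n + 1 + 1) * WI (S (S n)) * WI (S n)) with (((INR n + 2) * WI (S (S n))) * WI (S n)) by ring.
    rewrite R. rewrite <- IHn. ring.
Qed.

Definition Tf (h : Z -> R) (x : Z) : R := (h (x+1)%Z + h (x-1)%Z)/2.
Fixpoint Eh (N:nat) (h : Z -> R) : R := match N with O => h 0%Z | S N => Eh N (Tf h) end.

Lemma Eh_ext N : forall h g, (forall x, h x = g x) -> Eh N h = Eh N g.
Proof. induction N; intros h g H; simpl. apply H. apply IHN. intros; unfold Tf; rewrite !H; reflexivity. Qed.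

Lemma Eh_lin N : forall a b h g, Eh N (fun x => a * h x + b * g x) = a * Eh N h + b * Eh N g.
Proof. induction N; intros; simpl. reflexivity.
  rewrite <- IHN. apply Eh_ext. intros; unfold Tf; lra. Qed.

Definition delta (x : Z) (y : Z) : R := if Z.eqb y x then 1 else 0.
Definition Pn N x := Eh N (delta x).

Lemma Pn_S N x : Pn (S N) x = (Pn N (x-1) + Pn N (x+1))/2.
Proof. unfold Pn; simpl.
  rewrite (Eh_ext N _ (fun y => /2 * delta (x-1) y + /2 * delta (x+1) y)).
  - rewrite Eh_lin. lra.
  - intros y; unfold Tf, delta.
    destruct (Z.eqb_spec (y+1) x); destruct (Z.eqb_spec (y-1) x);
    destruct (Z.eqb_spec y (x-1)); destruct (Z.eqb_spec y (x+1)); try lia; lra.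
Qed.

Fixpoint bn (n k : nat) : R :=
  match n, k with
  | O, O => 1
  | O, S _ => 0
  | S _, O => 1
  | S n', S k' => bn n' k' + bn n' (S k')
  end.

Definition bnZ N (k : Z) : R := if Z.ltb k 0 then 0 else bn N (Z.to_nat k).

Lemma Pn_formula N : forall k : Z, Pn N (2*k - Z.of_nat N)%Z = bnZ N k / 2^N.
Proof.
  induction N; intros k.
  - unfold Pn. cbn [Eh]. unfold delta, bnZ. rewrite pow_O.
    destruct (Z.ltb_spec k 0).
    + destruct (Z.eqb_spec 0 (2*k - Z.of_nat 0)); [lia| field].
    + destruct (Z.eqb_spec 0 (2*k - Z.of_nat 0)).
      * replace (Z.to_nat k) with 0%nat by lia. simpl. field.
      * destruct (Z.to_nat k) eqn:E; [|simpl; field]. exfalso. lia.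
  - rewrite Pn_S. rewrite Nat2Z.inj_succ.
    replace (2 * k - Z.succ (Z.of_nat N) - 1)%Z with (2*(k-1) - Z.of_nat N)%Z by lia.
    replace (2 * k - Z.succ (Z.of_nat N) + 1)%Z with (2*k - Z.of_nat N)%Z by lia.
    rewrite !IHN. simpl pow.
    assert (B: bnZ (S N) k = bnZ N (k-1) + bnZ N k).
    { unfold bnZ. destruct (Z.ltb_spec k 0); destruct (Z.ltb_spec (k-1) 0).
      - lra.
      - lia.
      - assert (k = 0%Z) by lia. subst. simpl. destruct N; simpl; lra.
      - replace (Z.to_nat k) with (S (Z.to_nat (k-1))) by lia. simpl. reflexivity. }
    rewrite B. pose proof (pow_lt 2 N). field. lra.
Qed.

Lemma Pn_odd N : forall x, Z.odd (Z.of_nat N + x) = true -> Pn N x = 0.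
Proof.
  induction N; intros x H.
  - unfold Pn; simpl. unfold delta. destruct (Z.eqb_spec 0 x). subst. simpl in H. discriminate. reflexivity.
  - rewrite Pn_S. rewrite !IHN. lra.
    + rewrite Nat2Z.inj_succ in H. replace (Z.of_nat N + (x+1))%Z with (Z.succ (Z.of_nat N) + x)%Z by lia. exact H.
    + rewrite Nat2Z.inj_succ in H. replace (Z.of_nat N + (x-1))%Z with ((Z.succ (Z.of_nat N) + x) - 2)%Z by lia.
      rewrite Z.odd_sub. rewrite H. reflexivity.
Qed.

Lemma bn_big n : forall k, (n < k)%nat -> bn n k = 0.
Proof. induction n; intros k H; destruct k; try lia; simpl. reflexivity.
  rewrite !IHn by lia. lra. Qed.

Lemma bn_n n : bn n n = 1.
Proof. induction n; simpl. reflexivity. rewrite IHn, bn_big by lia. lra. Qed.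

Lemma bn_fact n : forall k, (k <= n)%nat -> bn n k * INR (fact k) * INR (fact (n-k)) = INR (fact n).
Proof.
  induction n; intros k Hk.
  - destruct k; [|lia]. simpl. lra.
  - destruct k.
    + simpl bn. rewrite Nat.sub_0_r. simpl fact at 1. simpl INR at 1. ring.
    + simpl bn. destruct (Nat.eq_dec k n).
      * subst. rewrite bn_n, bn_big by lia. rewrite Nat.sub_diag. simpl (fact 0). simpl (INR 1). ring.
      * assert (H1 := IHn k ltac:(lia)). assert (H2 := IHn (S k) ltac:(lia)).
        replace (S n - S k)%nat with (n - k)%nat by lia.
        replace (n - k)%nat with (S (n - S k)) in * by lia.
        set (r := (n - S k)%nat) in *.
        assert (En : INR n = INR k + 1 + INR r) by (subst r; rewrite <- S_INR, <- plus_INR; f_equal; lia).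
        change (fact (S k)) with (S k * fact k)%nat in *.
        change (fact (S r)) with (S r * fact r)%nat in *.
        change (fact (S n)) with (S n * fact n)%nat.
        rewrite !mult_INR, !S_INR in *.
        rewrite En. transitivity ((INR k + 1) * INR (fact n) + (INR r + 1) * INR (fact n)); [|ring]. rewrite <- H1 at 1. rewrite <- H2. ring.
Qed.

Definition q m := bn (2*m) m / 2^(2*m).

Lemma q_rec m : q (S m) = q m * (2 * INR m + 1) / (2 * INR m + 2).
Proof.
  unfold q.
  assert (F1 := bn_fact (2*m) m ltac:(lia)).
  assert (F2 := bn_fact (2*(S m)) (S m) ltac:(lia)).
  replace (2*m - m)%nat with m in F1 by lia.
  replace (2*S m - S m)%nat with (S m) in F2 by lia.
  replace (2 * S m)%nat with (S (S (2*m))) in * by lia.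
  change (fact (S m)) with (S m * fact m)%nat in F2.
  change (fact (S (S (2*m)))) with (S (S (2*m)) * (S (2*m) * fact (2*m)))%nat in F2.
  rewrite ?mult_INR, ?S_INR in F2. rewrite ?mult_INR, ?S_INR in F2.
  simpl (INR 0) in F2. rewrite <- F1 in F2.
  assert (Hf : INR (fact m) <> 0) by apply INR_fact_neq_0.
  assert (Hm : 0 <= INR m) by apply pos_INR.
  assert (HY : (INR m + 1) * INR (fact m) <> 0) by (apply Rmult_integral_contrapositive; split; lra).
  assert (B: bn (S (S (2*m))) (S m) = bn (2*m) m * (2 * (2*INR m + 1)) / (INR m + 1)).
  { apply (Rmult_eq_reg_r ((INR m + 1) * INR (fact m))); [|auto].
    apply (Rmult_eq_reg_r ((INR m + 1) * INR (fact m))); [|auto].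
    rewrite F2. field. lra. }
  rewrite B. simpl pow. field; repeat split; try lra; apply pow_nonzero; lra.
Qed.

Lemma I_even m : WI (2*m) = PI/2 * q m.
Proof.
  induction m.
  - simpl. rewrite I0. unfold q. simpl. field.
  - rewrite q_rec. pose proof (I_rec (2*m)) as R.
    replace (2*m+2)%nat with (2 * S m)%nat in R by lia.
    rewrite mult_INR in R. simpl (INR 2) in R. rewrite IHm in R.
    pose proof (pos_INR m).
    apply (Rmult_eq_reg_l (2 * INR m + 2)); [|lra]. replace (2 * INR m + 2) with ((1+1) * INR m + 2) at 1 by ring. rewrite R. field. lra.
Qed.

Lemma q_ge0 m : 0 <= q m.
Proof. pose proof (I_ge0 (2*m)). rewrite I_even in H. pose proof PI_RGT_0. nra. Qed.

Lemma q_sq m : (1 <= m)%nat -> q m ^ 2 * PI * INR m <= 1.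
Proof.
  intros Hm. destruct m as [|m']; [lia|].
  pose proof (I_prod (2*m'+1)) as P.
  replace (S (2*m'+1)) with (2 * S m')%nat in P by lia.
  pose proof (I_decr (2*m'+1)) as Dc. replace (S (2*m'+1)) with (2 * S m')%nat in Dc by lia.
  pose proof (I_ge0 (2 * S m')) as G.
  replace (INR (2*m'+1) + 1) with (2 * INR (S m')) in P by (rewrite S_INR, plus_INR, mult_INR; simpl; ring).
  rewrite I_even in P, Dc, G.
  pose proof PI_RGT_0. pose proof (pos_INR (S m')). pose proof (q_ge0 (S m')).
  set (x := q (S m')) in *. set (y := WI (2*m'+1)) in *. set (n := INR (S m')) in *.
  assert (K1: PI/2 * x * (PI/2*x) <= PI/2*x * y) by (apply Rmult_le_compat_l; lra).
  assert (K2: 2 * n * (PI/2*x*(PI/2*x)) <= PI/2).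
  { eapply Rle_trans; [|right; exact P]. replace (2 * n * (PI / 2 * x) * y) with (2 * n * (PI/2*x*y)) by ring.
    apply Rmult_le_compat_l; lra. }
  assert (K3: (PI/2) * (x^2 * PI * n) <= (PI/2) * 1) by (replace ((PI/2)*(x^2*PI*n)) with (2 * n * (PI/2*x*(PI/2*x))) by (simpl; field); lra).
  apply Rmult_le_reg_l in K3; lra.
Qed.

Definition aN N := Eh N (fun x => IZR (Z.abs x)).

Lemma aN_S N : aN (S N) = aN N + Pn N 0.
Proof. unfold aN, Pn. simpl.
  transitivity (1 * Eh N (fun x => IZR (Z.abs x)) + 1 * Eh N (delta 0)); [|ring].
  rewrite <- Eh_lin.
  apply Eh_ext. intros x. unfold Tf, delta.
  destruct (Z.eqb_spec x 0).
  - subst. simpl. lra.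
  - rewrite <- plus_IZR. rewrite <- (Rmult_1_l (IZR (Z.abs x))).
    replace ((Z.abs (x+1) + Z.abs (x-1)))%Z with (2 * Z.abs x)%Z by lia.
    rewrite mult_IZR. simpl. lra.
Qed.

Lemma Pn_even m : Pn (2*m) 0 = q m.
Proof. pose proof (Pn_formula (2*m) (Z.of_nat m)) as F.
  replace (2 * Z.of_nat m - Z.of_nat (2*m))%Z with 0%Z in F by lia.
  rewrite F. unfold bnZ, q. destruct (Z.ltb_spec (Z.of_nat m) 0). lia. rewrite Nat2Z.id. reflexivity. Qed.

Lemma Pn_oddN m : Pn (2*m+1) 0 = 0.
Proof. apply Pn_odd. replace (Z.of_nat (2*m+1) + 0)%Z with (2 * Z.of_nat m + 1)%Z by lia.
  rewrite Z.add_comm, Z.odd_add_mul_2. reflexivity. Qed.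

Lemma q_step m : q (S m) <= 2 * (sqrt (INR (S m) / PI) - sqrt (INR m / PI)).
Proof.
  pose proof (q_sq (S m) ltac:(lia)) as Q. pose proof (q_ge0 (S m)) as Q0.
  pose proof PI_RGT_0 as HP. rewrite S_INR in *. pose proof (pos_INR m) as Hm.
  set (M := INR m) in *. set (x := q (S m)) in *.
  assert (Hs := sqrt_sqrt ((M+1)/PI) ltac:(apply Rdiv_le_0_compat; lra)).
  assert (Hr := sqrt_sqrt (M/PI) ltac:(apply Rdiv_le_0_compat; lra)).
  assert (Hs0 : 0 < sqrt ((M+1)/PI)) by (apply sqrt_lt_R0; apply Rdiv_lt_0_compat; lra).
  assert (Hr0 := sqrt_pos (M/PI)).
  set (s := sqrt ((M+1)/PI)) in *. set (r := sqrt (M/PI)) in *.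
  assert (Es : s * s * PI = M + 1) by (rewrite Hs; field; lra).
  assert (Er : r * r * PI = M) by (rewrite Hr; field; lra).
  assert (A1 : x * PI * s <= 1).
  { assert (0 <= x * PI * s) by (apply Rmult_le_pos; [apply Rmult_le_pos|]; lra).
    assert ((x*PI*s)*(x*PI*s) <= 1).
    { replace ((x*PI*s)*(x*PI*s)) with (x^2 * PI * (s*s*PI)) by ring. rewrite Es. lra. }
    nra. }
  assert (A2 : 1 <= 2 * (s - r) * PI * s).
  { assert (0 <= (s - r)*(s-r)*PI) by (apply Rmult_le_pos; [nra|lra]). nra. }
  assert (A3 : x * PI * s <= 2 * (s - r) * PI * s) by lra.
  assert (0 < PI * s) by nra.
  apply (Rmult_le_reg_r (PI * s)); [lra|]. lra.
Qed.

Lemma aN_odd m : aN (2*m+1) <= 1 + 2 * sqrt (INR m / PI).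
Proof.
  induction m.
  - simpl. rewrite aN_S. unfold aN. simpl. replace (Pn 0 0) with 1 by (unfold Pn, delta; reflexivity).
    pose proof (sqrt_pos (0/PI)). lra.
  - replace (2 * S m + 1)%nat with (S (S (2*m+1))) by lia.
    rewrite aN_S, aN_S. rewrite Pn_oddN.
    replace (S (2*m+1)) with (2 * S m)%nat by lia. rewrite Pn_even.
    pose proof (q_step m). lra.
Qed.

Lemma divPI_le a b : a <= b/2 -> a / PI <= b / (2*PI).
Proof. intros. pose proof PI_RGT_0. replace (b/(2*PI)) with ((b/2)/PI) by (field; lra).
  unfold Rdiv at 1 2. apply Rmult_le_compat_r; [left; apply Rinv_0_lt_compat; lra| lra]. Qed.

Lemma aN_bound N : aN N <= 1 + 2 * sqrt (INR N / (2 * PI)).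
Proof.
  pose proof PI_RGT_0.
  destruct (Nat.Even_or_Odd N) as [[m Hm]|[m Hm]]; subst.
  - destruct m.
    + simpl. unfold aN; simpl. pose proof (sqrt_pos (0/(2*PI))). simpl in *. lra.
    + replace (2 * S m)%nat with (S (2*m+1)) by lia. rewrite aN_S, Pn_oddN, Rplus_0_r.
      eapply Rle_trans; [apply aN_odd|]. apply Rplus_le_compat_l. apply Rmult_le_compat_l; [lra|].
      apply sqrt_le_1_alt. apply divPI_le. rewrite S_INR, plus_INR, mult_INR. simpl. pose proof (pos_INR m). lra.
  - eapply Rle_trans; [apply aN_odd|]. apply Rplus_le_compat_l. apply Rmult_le_compat_l; [lra|].
    apply sqrt_le_1_alt. apply divPI_le. rewrite plus_INR, mult_INR. simpl. pose proof (pos_INR m). lra.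
Qed.

Definition upd (s : nat -> bool) (k : nat) (b : bool) : nat -> bool :=
  fun j => if Nat.eqb j k then b else s j.

Fixpoint avg (c : nat) (f : (nat -> bool) -> R) : R :=
  match c with
  | O => f (fun _ => false)
  | S c => (avg c (fun s => f (upd s c false)) + avg c (fun s => f (upd s c true))) / 2
  end.

Lemma avg_ext c : forall f g, (forall s, f s = g s) -> avg c f = avg c g.
Proof. induction c; intros f g H; simpl. apply H. f_equal. f_equal; apply IHc; intros; apply H. Qed.

Lemma avg_lin c : forall a b f g, avg c (fun s => a * f s + b * g s) = a * avg c f + b * avg c g.
Proof. induction c; intros; simpl. reflexivity. rewrite !IHc. lra. Qed.

Lemma avg_const c : forall x, avg c (fun _ => x) = x.
Proof. induction c; intros; simpl. reflexivity. rewrite !IHc. lra. Qed.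

Lemma avg_le c : forall f g, (forall s, f s <= g s) -> avg c f <= avg c g.
Proof. induction c; intros f g H; simpl. apply H.
  assert (avg c (fun s => f (upd s c false)) <= avg c (fun s => g (upd s c false))) by (apply IHc; auto).
  assert (avg c (fun s => f (upd s c true)) <= avg c (fun s => g (upd s c true))) by (apply IHc; auto).
  lra. Qed.

Lemma avg_lt c : forall f g, (forall s, f s < g s) -> avg c f < avg c g.
Proof. induction c; intros f g H; simpl. apply H.
  assert (avg c (fun s => f (upd s c false)) < avg c (fun s => g (upd s c false))) by (apply IHc; auto).
  assert (avg c (fun s => f (upd s c true)) < avg c (fun s => g (upd s c true))) by (apply IHc; auto).
  lra. Qed.

Lemma upd_same s k a b : upd (upd s k a) k b = upd s k b.
Proof. apply functional_extensionality; intro j; unfold upd. destruct (Nat.eqb j k); reflexivity. Qed.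

Lemma upd_comm s k k' a b : k <> k' -> upd (upd s k a) k' b = upd (upd s k' b) k a.
Proof. intros H. apply functional_extensionality; intro j; unfold upd.
  destruct (Nat.eqb_spec j k'); destruct (Nat.eqb_spec j k); subst; try reflexivity. lia. Qed.

Lemma upd_eq s k b : upd s k b k = b.
Proof. unfold upd. rewrite Nat.eqb_refl. reflexivity. Qed.

Lemma upd_neq s k b j : j <> k -> upd s k b j = s j.
Proof. intros H; unfold upd. destruct (Nat.eqb_spec j k); [lia|reflexivity]. Qed.

Lemma avg_split c : forall k f, (k < c)%nat ->
  2 * avg c f = avg c (fun s => f (upd s k false)) + avg c (fun s => f (upd s k true)).
Proof.
  induction c; intros k f Hk; [lia|]. simpl.
  destruct (Nat.eq_dec k c).
  - subst. assert (E: forall b b', avg c (fun s => f (upd (upd s c b') c b)) = avg c (fun s => f (upd s c b))) by (intros; apply avg_ext; intros; rewrite upd_same; reflexivity).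
    rewrite !E. lra.
  - assert (Hk' : (k < c)%nat) by lia.
    assert (E: forall a b, avg c (fun s => f (upd (upd s c b) k a)) = avg c (fun s => f (upd (upd s k a) c b))).
    { intros; apply avg_ext; intros; rewrite upd_comm by lia; reflexivity. }
    rewrite !E.
    pose proof (IHc k (fun s => f (upd s c false)) Hk'). pose proof (IHc k (fun s => f (upd s c true)) Hk').
    simpl in *. lra.
Qed.

Lemma avg_merge c : forall k k' f, (k < c)%nat -> (k' < c)%nat -> k <> k' ->
  2 * avg c f = avg c (fun s => f (upd s k' (xorb (s k) false))) + avg c (fun s => f (upd s k' (xorb (s k) true))).
Proof.
  intros k k' f Hk Hk' Hne.
  assert (S1 := avg_split c k (fun s => f (upd s k' (xorb (s k) false))) Hk).
  assert (S2 := avg_split c k (fun s => f (upd s k' (xorb (s k) true))) Hk).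
  cbv beta in S1, S2.
  assert (U: forall a e, avg c (fun s => f (upd (upd s k a) k' (xorb (upd s k a k) e))) = avg c (fun s => f (upd (upd s k a) k' (xorb a e)))).
  { intros; apply avg_ext; intros; rewrite upd_eq; reflexivity. }
  rewrite !U in S1, S2. simpl xorb in S1, S2.
  assert (T := avg_split c k f Hk).
  assert (T0 := avg_split c k' (fun s => f (upd s k false)) Hk').
  assert (T1 := avg_split c k' (fun s => f (upd s k true)) Hk').
  cbv beta in T0, T1.
  assert (E: forall a b, avg c (fun s => f (upd (upd s k' b) k a)) = avg c (fun s => f (upd (upd s k a) k' b))).
  { intros; apply avg_ext; intros; rewrite upd_comm by lia; reflexivity. }
  rewrite !E in T0, T1. lra.
Qed.
Fixpoint sumZ (n : nat) (f : nat -> Z) : Z := match n with O => 0%Z | S n => (sumZ n f + f n)%Z end.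
Fixpoint sumR (n : nat) (f : nat -> R) : R := match n with O => 0 | S n => sumR n f + f n end.

Lemma sumZ_ext n : forall f g, (forall j, (j < n)%nat -> f j = g j) -> sumZ n f = sumZ n g.
Proof. induction n; intros f g H; simpl. reflexivity. rewrite (IHn f g) by (intros; apply H; lia). rewrite H by lia. reflexivity. Qed.
Lemma sumR_ext n : forall f g, (forall j, (j < n)%nat -> f j = g j) -> sumR n f = sumR n g.
Proof. induction n; intros f g H; simpl. reflexivity. rewrite (IHn f g) by (intros; apply H; lia). rewrite H by lia. reflexivity. Qed.
Lemma sumZ_plus n f g : sumZ n (fun j => f j + g j)%Z = (sumZ n f + sumZ n g)%Z.
Proof. induction n; simpl. reflexivity. rewrite IHn. ring. Qed.
Lemma sumZ_mul n c f : sumZ n (fun j => c * f j)%Z = (c * sumZ n f)%Z.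
Proof. induction n; simpl. ring. rewrite IHn. ring. Qed.
Lemma sumZ_zero n : sumZ n (fun _ => 0%Z) = 0%Z.
Proof. induction n; simpl. reflexivity. rewrite IHn. reflexivity. Qed.
Lemma sumZ_swap n m f : sumZ n (fun j => sumZ m (fun k => f j k)) = sumZ m (fun k => sumZ n (fun j => f j k)).
Proof. induction n; simpl. rewrite sumZ_zero. reflexivity. rewrite IHn. rewrite <- sumZ_plus. reflexivity. Qed.
Lemma sumZ_pick n k0 (a : Z) : (k0 < n)%nat -> sumZ n (fun k => if Nat.eqb k0 k then a else 0%Z) = a.
Proof. induction n; intros H; simpl; [lia|].
  destruct (Nat.eq_dec k0 n).
  - subst. rewrite Nat.eqb_refl. rewrite (sumZ_ext n _ (fun _ => 0%Z)). rewrite sumZ_zero. ring.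
    intros j Hj. destruct (Nat.eqb_spec n j); [lia|reflexivity].
  - rewrite IHn by lia. destruct (Nat.eqb_spec k0 n); [lia|]. ring.
Qed.
Lemma sumR_plus n f g : sumR n (fun j => f j + g j) = sumR n f + sumR n g.
Proof. induction n; simpl. ring. rewrite IHn. ring. Qed.
Lemma sumR_const n c : sumR n (fun _ => c) = INR n * c.
Proof. induction n; simpl. ring. rewrite IHn. destruct n; simpl; ring. Qed.

Definition cb (b : bool) : Z := if b then 1%Z else (-1)%Z.
Definition Dz (X : list bool) : Z := (Z.of_nat (ones X) - Z.of_nat (zeros X))%Z.

Lemma Dz_map f n : Dz (map f (seq 0 n)) = sumZ n (fun j => cb (f j)).
Proof.
  induction n. reflexivity.
  rewrite seq_S, map_app. simpl sumZ. rewrite <- IHn. unfold Dz, ones, zeros.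
  rewrite !filter_app, !length_app. simpl. destruct (f n); simpl; lia.
Qed.

Lemma majority_true X : majority X = true -> (0 <= Dz X)%Z.
Proof. unfold majority, Dz. intros H; destruct (Nat.ltb_spec (ones X) (zeros X)); [discriminate|lia]. Qed.
Lemma majority_false X : majority X = false -> (Dz X < 0)%Z.
Proof. unfold majority, Dz. intros H; destruct (Nat.ltb_spec (ones X) (zeros X)); [lia|discriminate]. Qed.

Lemma nth_map_seq (f : nat -> bool) n i : (i < n)%nat -> nth i (map f (seq 0 n)) false = f i.
Proof. intros H. rewrite nth_indep with (d' := f 0%nat) by (rewrite length_map, length_seq; lia).
  rewrite map_nth, seq_nth by lia. reflexivity. Qed.

Definition lab := nat -> option nat * bool.
Definition val (L : lab) (s : nat -> bool) (j : nat) : bool :=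
  match L j with (Some k, p) => xorb (s k) p | (None, p) => p end.
Definition wt (L:lab) j k : Z := match L j with (Some k', p) => if Nat.eqb k' k then cb p else 0%Z | _ => 0%Z end.
Definition gw (L:lab) j : Z := match L j with (None, p) => cb p | _ => 0%Z end.
Definition eps (b : bool) : Z := if b then (-1)%Z else 1%Z.

Lemma avg_eps_zero c m (w : nat -> Z) : (m <= c)%nat ->
  avg c (fun s => IZR (sumZ m (fun k => eps (s k) * w k)%Z)) = 0.
Proof.
  induction m; intros Hm; simpl.
  - apply avg_const.
  - rewrite (avg_ext c _ (fun s => 1 * IZR (sumZ m (fun k => (eps (s k) * w k)%Z)) + 1 * IZR (eps (s m) * w m)%Z))
      by (intros; rewrite plus_IZR; ring).
    rewrite avg_lin. rewrite IHm by lia.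
    assert (Sp := avg_split c m (fun s => IZR (eps (s m) * w m)%Z) ltac:(lia)).
    cbv beta in Sp. rewrite (avg_ext c (fun s => IZR (eps (upd s m false m) * w m)%Z) (fun _ => IZR (w m))) in Sp
      by (intros; rewrite upd_eq; unfold eps; rewrite Z.mul_1_l; reflexivity).
    rewrite (avg_ext c (fun s => IZR (eps (upd s m true m) * w m)%Z) (fun _ => - IZR (w m))) in Sp
      by (intros; rewrite upd_eq; unfold eps; rewrite <- opp_IZR; f_equal; lia).
    rewrite !avg_const in Sp. lra.
Qed.

Lemma nz_aux n (w : nat -> Z) : sumR n (fun k => if Z.eqb (w k) 0 then 0 else 1) <= IZR (sumZ n (fun k => Z.abs (w k))).
Proof. induction n; simpl. lra.
  rewrite plus_IZR. destruct (Z.eqb_spec (w n) 0).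
  - pose proof (IZR_le 0 _ (Z.abs_nonneg (w n))). lra.
  - assert (1 <= IZR (Z.abs (w n))) by (apply IZR_le; lia). lra.
Qed.

Section Core.
Variable N : nat.

Definition inp (L : lab) s := map (val L s) (seq 0 N).
Definition wf (L : lab) := forall j k p, (j < N)%nat -> L j = (Some k, p) -> (k < N)%nat.
Definition u L k := sumZ N (fun j => wt L j k).
Definition G L := sumZ N (gw L).
Definition nzR L := sumR N (fun k => if Z.eqb (u L k) 0 then 0 else 1).

Lemma decomp L s : wf L -> Dz (inp L s) = (G L + sumZ N (fun k => eps (s k) * u L k))%Z.
Proof. intros H. unfold inp. rewrite Dz_map. unfold u, G.
  rewrite (sumZ_ext N (fun k => eps (s k) * sumZ N (fun j => wt L j k))%Z (fun k => sumZ N (fun j => eps (s k) * wt L j k)%Z)) by (intros; rewrite sumZ_mul; reflexivity).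
  rewrite sumZ_swap. rewrite <- sumZ_plus. apply sumZ_ext. intros j Hj.
  unfold val, gw, wt. destruct (L j) as [[k0|] p] eqn:E.
  - rewrite (sumZ_ext N _ (fun k => if Nat.eqb k0 k then (eps (s k0) * cb p)%Z else 0%Z)).
    + rewrite sumZ_pick by (eapply H; eauto). destruct (s k0), p; reflexivity.
    + intros k Hk. destruct (Nat.eqb_spec k0 k); subst; ring.
  - rewrite (sumZ_ext N _ (fun _ => 0%Z)) by (intros; ring). rewrite sumZ_zero. ring.
Qed.

Lemma nz_le_S L : nzR L <= IZR (sumZ N (fun k => Z.abs (u L k))).
Proof. unfold nzR. apply nz_aux. Qed.

Lemma avgD L : wf L -> avg N (fun s => IZR (Dz (inp L s))) = IZR (G L).
Proof. intros H.
  rewrite (avg_ext N _ (fun s => 1 * IZR (G L) + 1 * IZR (sumZ N (fun k => eps (s k) * u L k)%Z)))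
    by (intros; rewrite decomp by auto; rewrite plus_IZR; ring).
  rewrite avg_lin, avg_const, avg_eps_zero by lia. ring.
Qed.

Lemma leaf L b : wf L -> (forall s, majority (inp L s) = b) ->
  nzR L <= avg N (fun s => IZR (Z.abs (Dz (inp L s)))).
Proof.
  intros Hw Hm. pose proof (nz_le_S L) as HS.
  set (S := sumZ N (fun k => Z.abs (u L k))) in *.
  set (s1 := fun k => Z.ltb 0 (u L k)). set (s2 := fun k => Z.ltb (u L k) 0).
  assert (E1 : sumZ N (fun k => eps (s1 k) * u L k)%Z = (- S)%Z).
  { unfold S. rewrite (sumZ_ext N _ (fun k => (-1) * Z.abs (u L k))%Z). rewrite sumZ_mul. lia.
    intros k _. unfold s1. destruct (Z.ltb_spec 0 (u L k)); cbn [eps]; lia. }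
  assert (E2 : sumZ N (fun k => eps (s2 k) * u L k)%Z = S).
  { unfold S. apply sumZ_ext. intros k _.
    unfold s2. destruct (Z.ltb_spec (u L k) 0); cbn [eps]; lia. }
  destruct b.
  - rewrite (avg_ext N _ (fun s => IZR (Dz (inp L s)))).
    2:{ intros s. f_equal. apply Z.abs_eq. apply majority_true. apply Hm. }
    rewrite avgD by auto.
    pose proof (majority_true _ (Hm s1)) as D1. rewrite decomp, E1 in D1 by auto.
    assert (IZR S <= IZR (G L)) by (apply IZR_le; lia). lra.
  - rewrite (avg_ext N _ (fun s => -1 * IZR (Dz (inp L s)) + 0 * 0)).
    2:{ intros s. rewrite Z.abs_neq. rewrite opp_IZR. ring. pose proof (majority_false _ (Hm s)). lia. }
    rewrite avg_lin, avgD by auto.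
    pose proof (majority_false _ (Hm s2)) as D1. rewrite decomp, E2 in D1 by auto.
    assert (IZR S <= - IZR (G L)) by (rewrite <- opp_IZR; apply IZR_le; lia). lra.
Qed.

Definition Cavg t L := avg N (fun s => INR (cost t (inp L s))).
Definition Aavg L := avg N (fun s => IZR (Z.abs (Dz (inp L s)))).
Definition correct t L := forall s, output t (inp L s) = majority (inp L s).

Lemma cost_node q t0 t1 X a : answer q X = a ->
  INR (cost (Node q t0 t1) X) = 1 * INR (cost (if a then t1 else t0) X) + 1 * 1.
Proof. intros H. simpl cost. rewrite S_INR, H. destruct a; ring. Qed.

Lemma output_node q t0 t1 X a : answer q X = a ->
  output (Node q t0 t1) X = output (if a then t1 else t0) X.
Proof. intros H. simpl. rewrite H. destruct a; reflexivity. Qed.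

Lemma step2 q t0 t1 L (phi0 phi1 : (nat->bool)->(nat->bool)) L0 L1 a0 a1 :
  (forall f, 2 * avg N f = avg N (fun s => f (phi0 s)) + avg N (fun s => f (phi1 s))) ->
  (forall s, inp L (phi0 s) = inp L0 s) -> (forall s, inp L (phi1 s) = inp L1 s) ->
  (forall s, answer q (inp L0 s) = a0) -> (forall s, answer q (inp L1 s) = a1) ->
  wf L0 -> wf L1 ->
  2 * nzR L <= 3 + nzR L0 + nzR L1 ->
  (forall (a : bool) L', wf L' -> correct (if a then t1 else t0) L' ->
     2/3 * nzR L' <= Cavg (if a then t1 else t0) L' + 2/3 * Aavg L') ->
  correct (Node q t0 t1) L ->
  2/3 * nzR L <= Cavg (Node q t0 t1) L + 2/3 * Aavg L.
Proof.
  intros Hsp E0 E1 Q0 Q1 W0 W1 Hnz IH Hc.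
  assert (C : 2 * Cavg (Node q t0 t1) L = (Cavg (if a0 then t1 else t0) L0 + 1) + (Cavg (if a1 then t1 else t0) L1 + 1)).
  { unfold Cavg. rewrite Hsp.
    rewrite (avg_ext N (fun s => INR (cost (Node q t0 t1) (inp L (phi0 s))))
      (fun s => 1 * INR (cost (if a0 then t1 else t0) (inp L0 s)) + 1 * 1))
      by (intros; rewrite E0; apply cost_node; apply Q0).
    rewrite (avg_ext N (fun s => INR (cost (Node q t0 t1) (inp L (phi1 s))))
      (fun s => 1 * INR (cost (if a1 then t1 else t0) (inp L1 s)) + 1 * 1))
      by (intros; rewrite E1; apply cost_node; apply Q1).
    rewrite !avg_lin, !avg_const. ring. }
  assert (A : 2 * Aavg L = Aavg L0 + Aavg L1).
  { unfold Aavg. rewrite Hsp. f_equal; apply avg_ext; intros s; [rewrite E0|rewrite E1]; reflexivity. }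
  assert (K0 : correct (if a0 then t1 else t0) L0).
  { intros s. pose proof (Hc (phi0 s)) as H. rewrite E0 in H. rewrite (output_node _ _ _ _ a0) in H by apply Q0. exact H. }
  assert (K1 : correct (if a1 then t1 else t0) L1).
  { intros s. pose proof (Hc (phi1 s)) as H. rewrite E1 in H. rewrite (output_node _ _ _ _ a1) in H by apply Q1. exact H. }
  pose proof (IH a0 L0 W0 K0). pose proof (IH a1 L1 W1 K1). lra.
Qed.

Definition ground (L : lab) k b : lab := fun j =>
  match L j with (Some k', p) => if Nat.eqb k' k then (None, xorb b p) else (Some k', p) | x => x end.
Definition merge (L : lab) k k' e : lab := fun j =>
  match L j with (Some k'', r) => if Nat.eqb k'' k' then (Some k, xorb e r) else (Some k'', r) | x => x end.

Lemma inp_ground L k b s : inp L (upd s k b) = inp (ground L k b) s.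
Proof. unfold inp. apply map_ext. intros j. unfold val, ground.
  destruct (L j) as [[k'|] p]; [|reflexivity].
  destruct (Nat.eqb_spec k' k). subst; rewrite upd_eq; reflexivity. rewrite upd_neq by auto. reflexivity. Qed.

Lemma inp_merge L k k' e s : k <> k' -> inp L (upd s k' (xorb (s k) e)) = inp (merge L k k' e) s.
Proof. intros Hne. unfold inp. apply map_ext. intros j. unfold val, merge.
  destruct (L j) as [[k''|] p]; [|reflexivity].
  destruct (Nat.eqb_spec k'' k'). subst; rewrite upd_eq. rewrite xorb_assoc. reflexivity.
  rewrite upd_neq by auto. reflexivity. Qed.

Lemma wf_ground L k b : wf L -> wf (ground L k b).
Proof. intros H j k0 p Hj E. unfold ground in E. destruct (L j) as [[k'|] p'] eqn:Ej; [|discriminate].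
  destruct (Nat.eqb k' k); [discriminate|]. injection E; intros; subst. eapply H; eauto. Qed.

Lemma wf_merge L k k' e : (k < N)%nat -> wf L -> wf (merge L k k' e).
Proof. intros Hk H j k0 p Hj E. unfold merge in E. destruct (L j) as [[k''|] p'] eqn:Ej; [|discriminate].
  destruct (Nat.eqb k'' k'); injection E; intros; subst. auto. eapply H; eauto. Qed.

Lemma sumR_one n f g k : (k < n)%nat -> (forall x, (x < n)%nat -> x <> k -> f x = g x) ->
  sumR n f = sumR n g + (f k - g k).
Proof. revert f g; induction n; intros f g Hk H; [lia|]. simpl.
  destruct (Nat.eq_dec k n).
  - subst. rewrite (sumR_ext n f g) by (intros; apply H; lia). ring.
  - rewrite (IHn f g) by (auto; lia). rewrite (H n) by lia. ring.
Qed.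

Lemma u_ground L k b x : u (ground L k b) x = if Nat.eqb x k then 0%Z else u L x.
Proof. unfold u. destruct (Nat.eqb_spec x k).
  - subst. rewrite (sumZ_ext N _ (fun _ => 0%Z)). apply sumZ_zero.
    intros j _. unfold wt, ground. destruct (L j) as [[k'|] p]; [|reflexivity].
    destruct (Nat.eqb_spec k' k); [reflexivity|]. destruct (Nat.eqb_spec k' k); [lia|reflexivity].
  - apply sumZ_ext. intros j _. unfold wt, ground. destruct (L j) as [[k'|] p]; [|reflexivity].
    destruct (Nat.eqb_spec k' k); [|reflexivity]. subst. destruct (Nat.eqb_spec k x); [lia|reflexivity].
Qed.

Lemma nz_ground L k b : (k < N)%nat -> nzR L <= nzR (ground L k b) + 1.
Proof. intros Hk. unfold nzR. rewrite (sumR_one N _ (fun x => if Z.eqb (u (ground L k b) x) 0 then 0 else 1) k Hk).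
  - rewrite u_ground, Nat.eqb_refl. simpl. destruct (Z.eqb (u L k) 0); lra.
  - intros x _ Hx. rewrite u_ground. destruct (Nat.eqb_spec x k); [lia|reflexivity].
Qed.

Lemma u_merge L k k' e x : k <> k' ->
  u (merge L k k' e) x = if Nat.eqb x k' then 0%Z else if Nat.eqb x k then (u L k + eps e * u L k')%Z else u L x.
Proof. intros Hne. unfold u. destruct (Nat.eqb_spec x k').
  - subst. rewrite (sumZ_ext N _ (fun _ => 0%Z)). apply sumZ_zero.
    intros j _. unfold wt, merge. destruct (L j) as [[k''|] p]; [|reflexivity].
    destruct (Nat.eqb_spec k'' k'). destruct (Nat.eqb_spec k k'); [lia|reflexivity].
    destruct (Nat.eqb_spec k'' k'); [lia|reflexivity].
  - destruct (Nat.eqb_spec x k).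
    + subst. rewrite <- sumZ_mul, <- sumZ_plus. apply sumZ_ext. intros j _. unfold wt, merge.
      destruct (L j) as [[k''|] p]; [|ring].
      destruct (Nat.eqb_spec k'' k').
      * subst. rewrite Nat.eqb_refl. destruct (Nat.eqb_spec k' k); [lia|]. destruct e, p; reflexivity.
      * destruct (Nat.eqb_spec k'' k); destruct (Nat.eqb_spec k'' k'); try lia; ring.
    + apply sumZ_ext. intros j _. unfold wt, merge. destruct (L j) as [[k''|] p]; [|reflexivity].
      destruct (Nat.eqb_spec k'' k'). subst. destruct (Nat.eqb_spec k x); destruct (Nat.eqb_spec k' x); try lia; reflexivity.
      reflexivity.
Qed.

Lemma sumR_two n f g k k' : (k < n)%nat -> (k' < n)%nat -> k <> k' ->
  (forall x, (x < n)%nat -> x <> k -> x <> k' -> f x = g x) ->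
  sumR n f = sumR n g + (f k - g k) + (f k' - g k').
Proof. intros Hk Hk' Hne H.
  set (h := fun x => if Nat.eqb x k then f k else g x).
  rewrite (sumR_one n f h k' Hk').
  2:{ intros x Hx Hx'. unfold h. destruct (Nat.eqb_spec x k). subst; reflexivity. apply H; auto. }
  rewrite (sumR_one n h g k Hk).
  2:{ intros x Hx Hx'. unfold h. destruct (Nat.eqb_spec x k); [lia|reflexivity]. }
  unfold h. rewrite Nat.eqb_refl. destruct (Nat.eqb_spec k' k); [lia|]. ring.
Qed.

Lemma nz_merge L k k' : (k < N)%nat -> (k' < N)%nat -> k <> k' ->
  2 * nzR L <= 3 + nzR (merge L k k' false) + nzR (merge L k k' true).
Proof. intros Hk Hk' Hne. unfold nzR.
  assert (T : forall e, sumR N (fun x => if Z.eqb (u L x) 0 then 0 else 1) =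
     sumR N (fun x => if Z.eqb (u (merge L k k' e) x) 0 then 0 else 1)
     + ((if Z.eqb (u L k) 0 then 0 else 1) - (if Z.eqb (u L k + eps e * u L k')%Z 0 then 0 else 1))
     + ((if Z.eqb (u L k') 0 then 0 else 1) - 0)).
  { intros e. rewrite (sumR_two N _ (fun x => if Z.eqb (u (merge L k k' e) x) 0 then 0 else 1) k k' Hk Hk' Hne).
    - rewrite !u_merge by auto. rewrite !Nat.eqb_refl. destruct (Nat.eqb_spec k k'); [lia|]. reflexivity.
    - intros x _ H1 H2. rewrite u_merge by auto. destruct (Nat.eqb_spec x k'); [lia|]. destruct (Nat.eqb_spec x k); [lia|]. reflexivity. }
  pose proof (T false) as T0. pose proof (T true) as T1. cbn [eps] in T0, T1. clear T.
  destruct (Z.eqb_spec (u L k) 0); destruct (Z.eqb_spec (u L k') 0);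
  destruct (Z.eqb_spec (u L k + 1 * u L k')%Z 0); destruct (Z.eqb_spec (u L k + -1 * u L k')%Z 0); try lra; exfalso; lia.
Qed.

Definition IHform t0 t1 := forall (a : bool) L', wf L' -> correct (if a then t1 else t0) L' ->
     2/3 * nzR L' <= Cavg (if a then t1 else t0) L' + 2/3 * Aavg L'.

Lemma case_const q t0 t1 L a : wf L -> (forall s, answer q (inp L s) = a) -> IHform t0 t1 ->
  correct (Node q t0 t1) L -> 2/3 * nzR L <= Cavg (Node q t0 t1) L + 2/3 * Aavg L.
Proof. intros W Q IH C.
  apply (step2 q t0 t1 L (fun s => s) (fun s => s) L L a a); auto.
  - intros f. change (fun s => f s) with f. lra.
  - lra.
Qed.

Lemma case_ground q t0 t1 L k (ans : bool -> bool) : (k < N)%nat -> wf L ->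
  (forall b s, answer q (inp (ground L k b) s) = ans b) -> IHform t0 t1 ->
  correct (Node q t0 t1) L -> 2/3 * nzR L <= Cavg (Node q t0 t1) L + 2/3 * Aavg L.
Proof. intros Hk W Q IH C.
  apply (step2 q t0 t1 L (fun s => upd s k false) (fun s => upd s k true) (ground L k false) (ground L k true) (ans false) (ans true)); auto.
  - intros f. apply avg_split; auto.
  - intros; apply inp_ground.
  - intros; apply inp_ground.
  - apply wf_ground; auto.
  - apply wf_ground; auto.
  - pose proof (nz_ground L k false Hk). pose proof (nz_ground L k true Hk). lra.
Qed.

Lemma case_merge q t0 t1 L k k' (ans : bool -> bool) : (k < N)%nat -> (k' < N)%nat -> k <> k' -> wf L ->
  (forall e s, answer q (inp (merge L k k' e) s) = ans e) -> IHform t0 t1 ->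
  correct (Node q t0 t1) L -> 2/3 * nzR L <= Cavg (Node q t0 t1) L + 2/3 * Aavg L.
Proof. intros Hk Hk' Hne W Q IH C.
  apply (step2 q t0 t1 L (fun s => upd s k' (xorb (s k) false)) (fun s => upd s k' (xorb (s k) true))
     (merge L k k' false) (merge L k k' true) (ans false) (ans true)); auto.
  - intros f. apply avg_merge; auto.
  - intros; apply inp_merge; auto.
  - intros; apply inp_merge; auto.
  - apply wf_merge; auto.
  - apply wf_merge; auto.
  - apply nz_merge; auto.
Qed.

Lemma ans_nth L s i : (i < N)%nat -> nth i (inp L s) false = val L s i.
Proof. intros; unfold inp; apply nth_map_seq; auto. Qed.

Lemma core t : forall L, wf L -> valid_tree N t -> correct t L ->
  2/3 * nzR L <= Cavg t L + 2/3 * Aavg L.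
Proof.
  induction t as [b | q t0 IH0 t1 IH1]; intros L W V C.
  - assert (Hm : forall s, majority (inp L s) = b) by (intros s; rewrite <- (C s); reflexivity).
    pose proof (leaf L b W Hm). unfold Cavg. simpl cost.
    rewrite (avg_ext N _ (fun _ => 0)) by reflexivity. rewrite avg_const. unfold Aavg. lra.
  - destruct V as [Vq [V0 V1]].
    assert (IH : IHform t0 t1) by (intros a L' W' C'; destruct a; [apply IH1|apply IH0]; auto).
    destruct q as [i | i j]; simpl in Vq.
    + destruct (L i) as [[k|] p] eqn:Ei.
      * assert (Hk : (k < N)%nat) by (eapply W; eauto).
        apply (case_ground (QBit i) t0 t1 L k (fun b => xorb b p)); auto.
        intros b s. simpl. rewrite ans_nth by auto. unfold val, ground. rewrite Ei, Nat.eqb_refl. reflexivity.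
      * apply (case_const (QBit i) t0 t1 L p); auto.
        intros s. simpl. rewrite ans_nth by auto. unfold val. rewrite Ei. reflexivity.
    + destruct Vq as [Vi Vj].
      destruct (L i) as [[k1|] p1] eqn:Ei; destruct (L j) as [[k2|] p2] eqn:Ej.
      * assert (Hk1 : (k1 < N)%nat) by exact (W i k1 p1 Vi Ei).
        assert (Hk2 : (k2 < N)%nat) by exact (W j k2 p2 Vj Ej).
        destruct (Nat.eq_dec k1 k2).
        -- subst. apply (case_const (QXor i j) t0 t1 L (xorb p1 p2)); auto.
           intros s. simpl. rewrite !ans_nth by auto. unfold val. rewrite Ei, Ej.
           destruct (s k2), p1, p2; reflexivity.
        -- apply (case_merge (QXor i j) t0 t1 L k1 k2 (fun e => xorb p1 (xorb e p2))); auto.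
           intros e s. simpl. rewrite !ans_nth by auto. unfold val, merge. rewrite Ei, Ej.
           rewrite Nat.eqb_refl. destruct (Nat.eqb_spec k1 k2); [lia|].
           destruct (s k1), p1, p2, e; reflexivity.
      * assert (Hk1 : (k1 < N)%nat) by exact (W i k1 p1 Vi Ei).
        apply (case_ground (QXor i j) t0 t1 L k1 (fun b => xorb (xorb b p1) p2)); auto.
        intros b s. simpl. rewrite !ans_nth by auto. unfold val, ground. rewrite Ei, Ej, Nat.eqb_refl. reflexivity.
      * assert (Hk2 : (k2 < N)%nat) by exact (W j k2 p2 Vj Ej).
        apply (case_ground (QXor i j) t0 t1 L k2 (fun b => xorb p1 (xorb b p2))); auto.
        intros b s. simpl. rewrite !ans_nth by auto. unfold val, ground. rewrite Ei, Ej, Nat.eqb_refl. reflexivity.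
      * apply (case_const (QXor i j) t0 t1 L (xorb p1 p2)); auto.
        intros s. simpl. rewrite !ans_nth by auto. unfold val. rewrite Ei, Ej. reflexivity.
Qed.

Definition L0 : lab := fun j => (Some j, false).

Lemma wf_L0 : wf L0.
Proof. intros j k p Hj E. unfold L0 in E. injection E; intros; subst; auto. Qed.

Lemma nz_L0 : nzR L0 = INR N.
Proof. unfold nzR. rewrite (sumR_ext N _ (fun _ => 1)). rewrite sumR_const. ring.
  intros k Hk. unfold u. rewrite (sumZ_ext N _ (fun j => if Nat.eqb k j then (-1)%Z else 0%Z)).
  - rewrite sumZ_pick by auto. reflexivity.
  - intros j _. unfold wt, L0. destruct (Nat.eqb_spec j k); destruct (Nat.eqb_spec k j); subst; try lia; reflexivity.
Qed.

Lemma Dz_L0 s : Dz (inp L0 s) = sumZ N (fun j => cb (s j)).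
Proof. unfold inp. rewrite Dz_map. apply sumZ_ext. intros j _. unfold val, L0. rewrite xorb_false_r. reflexivity. Qed.

End Core.

Lemma avg_Eh n : forall h, avg n (fun s => h (sumZ n (fun j => cb (s j)))) = Eh n h.
Proof.
  induction n; intros h; simpl. reflexivity.
  rewrite (avg_ext n (fun s => h (sumZ n (fun j => cb (upd s n false j)) + cb (upd s n false n))%Z)
     (fun s => h (sumZ n (fun j => cb (s j)) + (-1))%Z)).
  2:{ intros s. rewrite upd_eq. f_equal. f_equal. apply sumZ_ext. intros j Hj. rewrite upd_neq by lia. reflexivity. }
  rewrite (avg_ext n (fun s => h (sumZ n (fun j => cb (upd s n true j)) + cb (upd s n true n))%Z)
     (fun s => h (sumZ n (fun j => cb (s j)) + 1)%Z)).
  2:{ intros s. rewrite upd_eq. f_equal. f_equal. apply sumZ_ext. intros j Hj. rewrite upd_neq by lia. reflexivity. }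
  rewrite (IHn (fun x => h (x + -1)%Z)), (IHn (fun x => h (x + 1)%Z)).
  rewrite (Eh_ext n (Tf h) (fun x => /2 * h (x + 1)%Z + /2 * h (x + -1)%Z)).
  - rewrite Eh_lin. lra.
  - intros x. unfold Tf. replace (x - 1)%Z with (x + -1)%Z by lia. lra.
Qed.

Lemma Aavg_L0 N : Aavg N (L0) = aN N.
Proof. unfold Aavg, aN. rewrite <- avg_Eh. apply avg_ext. intros s. rewrite Dz_L0. reflexivity. Qed.

Lemma Un_cv_ext' (a b : nat -> R) l : (forall n, a n = b n) -> Un_cv a l -> Un_cv b l.
Proof. intros E H eps He. destruct (H eps He) as [M HM]. exists M. intros n Hn. rewrite <- E. auto. Qed.

Lemma Un_cv_const c : Un_cv (fun _ => c) c.
Proof. intros eps He. exists 0%nat. intros. unfold Rdist. rewrite Rminus_diag, Rabs_R0. lra. Qed.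

Lemma infsum_half a b la lb : infinite_sum a la -> infinite_sum b lb ->
  infinite_sum (fun k => (a k + b k)/2) ((la + lb)/2).
Proof. intros Ha Hb. unfold infinite_sum in *.
  change (Un_cv (fun n => sum_f_R0 (fun k => (a k + b k)/2) n) ((la+lb)/2)).
  unfold Rdiv. apply (Un_cv_ext' (fun n => (sum_f_R0 a n + sum_f_R0 b n) * /2)).
  - intros n; induction n; simpl. ring. rewrite <- IHn. ring.
  - apply CV_mult. apply CV_plus; assumption. apply Un_cv_const.
Qed.

Lemma infsum_scal a l c : infinite_sum a l -> infinite_sum (fun k => a k * c) (l * c).
Proof. intros Ha. unfold infinite_sum in *.
  change (Un_cv (fun n => sum_f_R0 (fun k => a k * c) n) (l*c)).
  apply (Un_cv_ext' (fun n => sum_f_R0 a n * c)).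
  - intros n; induction n; simpl. ring. rewrite <- IHn. ring.
  - apply CV_mult. assumption. apply Un_cv_const.
Qed.

Lemma avg_infsum c : forall (F : nat -> (nat -> bool) -> R) (S : (nat -> bool) -> R),
  (forall s, infinite_sum (fun k => F k s) (S s)) ->
  infinite_sum (fun k => avg c (F k)) (avg c S).
Proof. induction c; intros F S H; simpl. apply H.
  apply infsum_half; apply (IHc (fun k s => F k (upd s c _)) (fun s => S (upd s c _))); intros; apply H.
Qed.

Lemma infsum_le a b la lb : (forall k, a k <= b k) -> infinite_sum a la -> infinite_sum b lb -> la <= lb.
Proof. intros H Ha Hb. eapply Rle_cv_lim; [|exact Ha|exact Hb].
  intros n. apply sum_Rle. intros; auto. Qed.

Lemma final_ineq N : 2 / 3 * INR N - sqrt (8 * INR N / (9 * PI)) - 1 <= 2/3 * (INR N - aN N).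
Proof.
  pose proof (aN_bound N). pose proof PI_RGT_0. pose proof (pos_INR N).
  replace (8 * INR N / (9 * PI)) with ((4/3) * (4/3) * (INR N / (2 * PI))) by (field; lra).
  rewrite sqrt_mult by (try nra; apply Rdiv_le_0_compat; lra).
  rewrite sqrt_square by lra. lra.
Qed.

Theorem mainTheorem13 :
  exists d : R,
  forall (N : nat), (1 <= N)%nat ->
  forall (t : nat -> xtree) (p : nat -> R),
    (forall k, 0 <= p k) ->
    infinite_sum p 1 ->
    (forall k, valid_tree N (t k)) ->
    (forall X : list bool, length X = N ->
       forall k, 0 < p k -> output (t k) X = majority X) ->
    exists X : list bool, length X = N /\
      forall s : R,
        infinite_sum (fun k => p k * INR (cost (t k) X)) s ->
        2 / 3 * INR N - sqrt (8 * INR N / (9 * PI)) - d <= s.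
Proof.
  exists 1. intros N HN t p Hp0 Hp1 Hv Hc.
  set (B := 2 / 3 * INR N - sqrt (8 * INR N / (9 * PI)) - 1).
  set (Lb := 2/3 * (INR N - aN N)).
  assert (HB : B <= Lb) by apply final_ineq.
  assert (Hlen : forall s, length (inp N L0 s) = N) by (intros; unfold inp; rewrite length_map, length_seq; reflexivity).
  assert (Hcore : forall k, 0 < p k -> Lb <= Cavg N (t k) L0).
  { intros k Hk. pose proof (core N (t k) L0 (wf_L0 N) (Hv k)) as H.
    rewrite nz_L0, Aavg_L0 in H. unfold Lb. apply Rmult_le_reg_l with 1; [lra|].
    assert (Hcor : correct N (t k) L0) by (intros s; apply Hc; auto).
    specialize (H Hcor). lra. }
  destruct (classic (exists X : list bool, length X = N /\
      forall s : R, infinite_sum (fun k => p k * INR (cost (t k) X)) s -> B <= s)) as [H|H]; [exact H|].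
  exfalso.
  assert (Hex : forall sg, {s | infinite_sum (fun k => p k * INR (cost (t k) (inp N L0 sg))) s /\ s < B}).
  { intros sg. apply constructive_indefinite_description.
    apply NNPP. intros H2. apply H. exists (inp N L0 sg). split; auto.
    intros s Hs. apply Rnot_lt_le. intros Hlt. apply H2. exists s. auto. }
  set (S := fun sg => proj1_sig (Hex sg)).
  assert (HS : forall sg, infinite_sum (fun k => p k * INR (cost (t k) (inp N L0 sg))) (S sg))
    by (intros; unfold S; destruct (Hex sg); simpl; tauto).
  assert (HSB : forall sg, S sg < B) by (intros; unfold S; destruct (Hex sg); simpl; tauto).
  pose proof (avg_infsum N (fun k sg => p k * INR (cost (t k) (inp N L0 sg))) S HS) as A1.
  pose proof (infsum_scal p 1 Lb Hp1) as A2.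
  assert (Hle : 1 * Lb <= avg N S).
  { eapply infsum_le; [|exact A2|exact A1]. intros k. cbv beta.
    rewrite (avg_ext N _ (fun sg => p k * INR (cost (t k) (inp N L0 sg)) + 0 * 0)) by (intros; ring).
    rewrite avg_lin.
    destruct (Rle_lt_or_eq_dec 0 (p k) (Hp0 k)) as [Hpk|Hpk].
    - specialize (Hcore k Hpk). unfold Cavg in Hcore.
      assert (p k * Lb <= p k * avg N (fun s => INR (cost (t k) (inp N L0 s)))) by (apply Rmult_le_compat_l; lra).
      lra.
    - rewrite <- Hpk. lra. }
  assert (avg N S < B). { rewrite <- (avg_const N B). apply avg_lt. auto. }
  lra.
Qed.
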